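(* Let $M$ be a symmetric homogeneous stable mean having a symmetric asymptotic expansion with coefficients $(a_n)$. Then, as $x\to\infty$, $$M(x-t,x+t)=x+a_1t^2x^{-1}+\tfrac16a_1(1+a_1)(1-4a_1)t^4x^{-3}+\tfrac1{90}a_1(1+a_1)(6-31a_1+36a_1^2+64a_1^3)t^6x^{-5}$$ $$+\tfrac1{2520}a_1(1+a_1)\big(90-531a_1+937a_1^2+568a_1^3-3088a_1^4-2176a_1^5\big)t^8x^{-7}+O(x^{-9}).$$
   Context: A bi-variate mean is $M:(0,\infty)^2\to(0,\infty)$ with $\min(s,t)\le M(s,t)\le\max(s,t)$; symmetric: $M(s,t)=M(t,s)$; homogeneous: $M(\lambda s,\lambda t)=\lambda M(s,t)$. $M$ is stable if $M(s,t)=M\big(M(s,M(s,t)),M(M(s,t),t)\big)$ for all $s,t>0$. $M$ has a symmetric asymptotic expansion with coefficients $(a_n)$ if for every fixed real $t$ and every $N\ge0$, $M(x-t,x+t)=\sum_{n=0}^Na_nt^{2n}x^{-2n+1}+o(x^{-2N+1})$ as $x\to\infty$. *)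

(* Defs.v *)
From Stdlib Require Import Reals.
Open Scope R_scope.

(* A bi-variate mean on (0,oo)^2; M is a total function R -> R -> R but only
   its values on (0,oo)^2 are constrained. *)
Definition is_mean (M : R -> R -> R) : Prop :=
  forall s t, 0 < s -> 0 < t ->
    0 < M s t /\ Rmin s t <= M s t /\ M s t <= Rmax s t.

Definition symmetric_mean (M : R -> R -> R) : Prop :=
  forall s t, 0 < s -> 0 < t -> M s t = M t s.

Definition homogeneous_mean (M : R -> R -> R) : Prop :=
  forall l s t, 0 < l -> 0 < s -> 0 < t -> M (l * s) (l * t) = l * M s t.

Definition stable_mean (M : R -> R -> R) : Prop :=
  forall s t, 0 < s -> 0 < t ->
    M s t = M (M s (M s t)) (M (M s t) t).

Definition little_o_infty (f g : R -> R) : Prop :=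
  forall eps, 0 < eps -> exists X, forall x, X < x -> Rabs (f x) <= eps * Rabs (g x).

Definition big_O_infty (f g : R -> R) : Prop :=
  exists C X, forall x, X < x -> Rabs (f x) <= C * Rabs (g x).

Definition has_sym_asymp_expansion (M : R -> R -> R) (a : nat -> R) : Prop :=
  forall (t : R) (N : nat),
    little_o_infty
      (fun x => M (x - t) (x + t)
                - sum_f_R0 (fun n => a n * t ^ (2 * n) * powerRZ x (1 - 2 * Z.of_nat n)) N)
      (fun x => powerRZ x (1 - 2 * Z.of_nat N)).

(* Main.v *)
Require Import Defs.
From Stdlib Require Import Reals Lra Lia Psatz QArith Qreals List ZArith.
Import ListNotations.
Open Scope R_scope.


Definition Mono := list nat.
Definition Poly := list (Mono * Q).

Fixpoint imono (v : nat -> R) (i : nat) (m : Mono) : R :=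
  match m with [] => 1 | e :: m' => v i ^ e * imono v (S i) m' end.

Definition ipoly (v : nat -> R) (p : Poly) : R :=
  fold_right (fun mc acc => Q2R (snd mc) * imono v 0 (fst mc) + acc) 0 p.

Fixpoint madd (m1 m2 : Mono) : Mono :=
  match m1, m2 with
  | [], _ => m2
  | _, [] => m1
  | a :: r1, b :: r2 => (a + b)%nat :: madd r1 r2
  end.

Lemma imono_madd v m1 : forall m2 i, imono v i (madd m1 m2) = imono v i m1 * imono v i m2.
Proof.
  induction m1 as [|a m1 IH]; intros [|b m2] i; simpl; try ring.
  rewrite IH, pow_add; ring.
Qed.

Fixpoint pins (m : Mono) (c : Q) (p : Poly) : Poly :=
  match p with
  | [] => if Qeq_bool c 0 then [] else [(m, c)]
  | (m', c') :: p' =>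
      if list_eq_dec Nat.eq_dec m m' then
        (let s := Qred (c + c') in if Qeq_bool s 0 then p' else (m', s) :: p')
      else (m', c') :: pins m c p'
  end.

Lemma Q2R_zero_of c : Qeq_bool c 0 = true -> Q2R c = 0.
Proof.
  intro H. apply Qeq_bool_eq in H. apply Qeq_eqR in H. rewrite H.
  unfold Q2R; simpl; field.
Qed.

Lemma ipoly_pins v m c p : ipoly v (pins m c p) = Q2R c * imono v 0 m + ipoly v p.
Proof.
  induction p as [|[m' c'] p IH]; cbn [pins].
  - destruct (Qeq_bool c 0) eqn:E.
    + rewrite (Q2R_zero_of _ E); unfold ipoly; simpl; ring.
    + unfold ipoly; simpl; ring.
  - destruct (list_eq_dec Nat.eq_dec m m') as [<-|Hne].
    + destruct (Qeq_bool (Qred (c + c')) 0) eqn:E.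
      * pose proof (Q2R_zero_of _ E) as H0.
        rewrite (Qeq_eqR _ _ (Qred_correct _)), Q2R_plus in H0.
        unfold ipoly in *. cbn [fold_right fst snd].
        replace (Q2R c' * imono v 0 m) with ((Q2R c + Q2R c') * imono v 0 m - Q2R c * imono v 0 m) by ring.
        rewrite H0; ring.
      * unfold ipoly; cbn [fold_right fst snd].
        rewrite (Qeq_eqR _ _ (Qred_correct _)), Q2R_plus. ring.
    + unfold ipoly in *; cbn [fold_right fst snd]. rewrite IH. ring.
Qed.

Definition padd (p q : Poly) : Poly :=
  fold_right (fun mc acc => pins (fst mc) (snd mc) acc) q p.

Lemma ipoly_padd v p q : ipoly v (padd p q) = ipoly v p + ipoly v q.
Proof.
  unfold padd; induction p as [|[m c] p IH]; cbn [fold_right fst snd].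
  - unfold ipoly at 2; cbn [fold_right]; ring.
  - rewrite ipoly_pins, IH. unfold ipoly; cbn [fold_right fst snd]; ring.
Qed.

Definition pmul1 (m : Mono) (c : Q) (q acc : Poly) : Poly :=
  fold_right (fun mc acc' => pins (madd m (fst mc)) (Qred (c * snd mc)) acc') acc q.

Lemma ipoly_pmul1 v m c q acc :
  ipoly v (pmul1 m c q acc) = Q2R c * imono v 0 m * ipoly v q + ipoly v acc.
Proof.
  unfold pmul1; induction q as [|[m' c'] q IH]; cbn [fold_right fst snd].
  - unfold ipoly at 2; cbn [fold_right]; ring.
  - rewrite ipoly_pins, (Qeq_eqR _ _ (Qred_correct _)), Q2R_mult, imono_madd, IH.
    unfold ipoly; cbn [fold_right fst snd]; ring.
Qed.

Definition pmul (p q : Poly) : Poly :=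
  fold_right (fun mc acc => pmul1 (fst mc) (snd mc) q acc) [] p.

Lemma ipoly_pmul v p q : ipoly v (pmul p q) = ipoly v p * ipoly v q.
Proof.
  unfold pmul; induction p as [|[m c] p IH]; cbn [fold_right fst snd].
  - unfold ipoly; cbn [fold_right]; ring.
  - rewrite ipoly_pmul1, IH. unfold ipoly; cbn [fold_right fst snd]; ring.
Qed.

Lemma ipoly_nil v : ipoly v [] = 0. Proof. reflexivity. Qed.

Definition pconst (c : Q) : Poly := pins [0;0;0;0]%nat c [].
Lemma ipoly_pconst v c : ipoly v (pconst c) = Q2R c.
Proof. unfold pconst; rewrite ipoly_pins; unfold ipoly; cbn [fold_right imono pow]; ring. Qed.

Definition one := pconst 1.
Definition mone := pconst (-1).
Definition half := pconst (1#2).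
Lemma ipoly_one v : ipoly v one = 1.
Proof. unfold one; rewrite ipoly_pconst; unfold Q2R; simpl; field. Qed.
Lemma ipoly_mone v : ipoly v mone = -1.
Proof. unfold mone; rewrite ipoly_pconst; unfold Q2R; simpl; field. Qed.
Lemma ipoly_half v : ipoly v half = /2.
Proof. unfold half; rewrite ipoly_pconst; unfold Q2R; simpl; field. Qed.

Definition X1 : Poly := [([1;0;0;0]%nat, 1%Q)].
Definition X2 : Poly := [([0;1;0;0]%nat, 1%Q)].
Definition X3 : Poly := [([0;0;1;0]%nat, 1%Q)].
Definition X4 : Poly := [([0;0;0;1]%nat, 1%Q)].
Lemma ipoly_X1 v : ipoly v X1 = v 0%nat. Proof. unfold ipoly, Q2R; simpl; field. Qed.
Lemma ipoly_X2 v : ipoly v X2 = v 1%nat. Proof. unfold ipoly, Q2R; simpl; field. Qed.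
Lemma ipoly_X3 v : ipoly v X3 = v 2%nat. Proof. unfold ipoly, Q2R; simpl; field. Qed.
Lemma ipoly_X4 v : ipoly v X4 = v 3%nat. Proof. unfold ipoly, Q2R; simpl; field. Qed.

Fixpoint peval (s : list R) (u : R) : R :=
  match s with [] => 0 | c :: s' => c + u * peval s' u end.
Definition sev (v : nat -> R) (S : list Poly) (u : R) := peval (map (ipoly v) S) u.

Fixpoint sadd (S T : list Poly) : list Poly :=
  match S, T with
  | [], _ => T
  | _, [] => S
  | a :: S', b :: T' => padd a b :: sadd S' T'
  end.

Lemma sev_sadd v S : forall T u, sev v (sadd S T) u = sev v S u + sev v T u.
Proof.
  unfold sev; induction S as [|a S IH]; intros [|b T] u; simpl; try ring.
  rewrite ipoly_padd, IH; ring.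
Qed.

Definition sscale (c : Poly) (S : list Poly) := map (pmul c) S.
Lemma sev_sscale v c S u : sev v (sscale c S) u = ipoly v c * sev v S u.
Proof.
  unfold sev, sscale; induction S as [|a S IH]; simpl. ring.
  rewrite ipoly_pmul, IH; ring.
Qed.

Fixpoint smul (S T : list Poly) : list Poly :=
  match S with
  | [] => []
  | a :: S' => sadd (map (pmul a) T) ([] :: smul S' T)
  end.

Lemma sev_smul v S T u : sev v (smul S T) u = sev v S u * sev v T u.
Proof.
  induction S as [|a S IH]; cbn [smul]. unfold sev; cbn [map peval]; ring.
  rewrite sev_sadd. change (map (pmul a) T) with (sscale a T). rewrite sev_sscale.
  unfold sev in *; cbn [map peval]. rewrite IH, ipoly_nil; ring.
Qed.

Definition mt (S T : list Poly) := firstn 10 (smul S T).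

Definition sinv (S : list Poly) : list Poly :=
  let y := [] :: tl S in
  Nat.iter 10 (fun x => sadd [one] (sscale mone (mt y x))) [one].

Definition scomp (A S : list Poly) : list Poly :=
  fold_right (fun c acc => sadd [c] (mt S acc)) [] A.

Definition is_one (X : list Poly) : bool :=
  match X with
  | [([e1;e2;e3;e4], c)] :: rest =>
     (Nat.eqb e1 0 && Nat.eqb e2 0 && Nat.eqb e3 0 && Nat.eqb e4 0 && Qeq_bool c 1
      && forallb (fun p => match p with [] => true | _ => false end) rest)%bool
  | _ => false
  end.

Definition head_zero (X : list Poly) : bool :=
  match X with [] :: _ => true | _ => false end.

Definition Asym : list Poly := [one; X1; X2; X3; X4].
Definition Psym : list Poly := [one; []; X1; []; X2; []; X3; []; X4; []].
Definition Sm : list Poly := [one; mone].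
Definition Sp : list Poly := [one; one].

Definition CSof (SA SB : list Poly) := sscale half (sadd SA SB).
Definition WSof (SA SB : list Poly) :=
  sscale half (mt (sadd SB (sscale mone SA)) (sinv (CSof SA SB))).
Definition mstep (SA SB : list Poly) :=
  mt (CSof SA SB) (scomp Asym (mt (WSof SA SB) (WSof SA SB))).
Definition mcheck (SA SB : list Poly) : bool :=
  (is_one (mt (CSof SA SB) (sinv (CSof SA SB))) && head_zero (WSof SA SB))%bool.

Definition Pp := mstep Sm Psym.
Definition Pq := mstep Psym Sp.
Definition Qf := mstep Pp Pq.
Definition Dsym := sadd Psym (sscale mone Qf).

Lemma chk1 : mcheck Sm Psym = true. Proof. vm_compute. reflexivity. Qed.
Lemma chk2 : mcheck Psym Sp = true. Proof. vm_compute. reflexivity. Qed.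
Lemma chk3 : mcheck Pp Pq = true. Proof. vm_compute. reflexivity. Qed.


Definition approxF (h p : R -> R) :=
  exists K d, 0 < d /\ forall u, 0 < u < d -> Rabs (h u - p u) <= K * u ^ 10.

Lemma peval_bound s : exists B, 0 <= B /\ forall u, 0 <= u <= 1 -> Rabs (peval s u) <= B.
Proof.
  induction s as [|c s [B [HB IH]]]; simpl.
  - exists 0; split; [lra|]; intros; rewrite Rabs_R0; lra.
  - exists (Rabs c + B); split; [pose proof (Rabs_pos c); lra|].
    intros u Hu. eapply Rle_trans; [apply Rabs_triang|].
    rewrite Rabs_mult. apply Rplus_le_compat_l.
    rewrite <- (Rmult_1_l B). apply Rmult_le_compat; try apply Rabs_pos.
    rewrite Rabs_right; lra. auto.
Qed.

Lemma sev_bound v S : exists B, 0 <= B /\ forall u, 0 <= u <= 1 -> Rabs (sev v S u) <= B.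
Proof. apply peval_bound. Qed.

Lemma peval_split n : forall s u, peval s u = peval (firstn n s) u + u ^ n * peval (skipn n s) u.
Proof.
  induction n as [|n IH]; intros [|c s] u; simpl; try ring.
  rewrite (IH s u). ring.
Qed.

Lemma approx_ext h h' p : approxF h p ->
  (exists d, 0 < d /\ forall u, 0 < u < d -> h u = h' u) -> approxF h' p.
Proof.
  intros [K [d [Hd H]]] [d' [Hd' E]]. exists K, (Rmin d d'). split.
  apply Rmin_pos; auto. intros u Hu.
  pose proof (Rmin_l d d'); pose proof (Rmin_r d d').
  rewrite <- E by lra. apply H. lra.
Qed.

Lemma approx_ext_r h p p' : approxF h p -> (forall u, p u = p' u) -> approxF h p'.
Proof.
  intros [K [d [Hd H]]] E. exists K, d. split; auto. intros u Hu. rewrite <- E. auto.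
Qed.

Lemma approx_self p : approxF p p.
Proof.
  exists 0, 1. split; [lra|]. intros u Hu. unfold Rminus. rewrite Rplus_opp_r, Rabs_R0. lra.
Qed.

Lemma approx_add h k p q : approxF h p -> approxF k q ->
  approxF (fun u => h u + k u) (fun u => p u + q u).
Proof.
  intros [K1 [d1 [Hd1 H1]]] [K2 [d2 [Hd2 H2]]]. exists (K1 + K2), (Rmin d1 d2).
  split. apply Rmin_pos; auto. intros u Hu.
  pose proof (Rmin_l d1 d2); pose proof (Rmin_r d1 d2).
  replace (h u + k u - (p u + q u)) with ((h u - p u) + (k u - q u)) by ring.
  eapply Rle_trans; [apply Rabs_triang|].
  specialize (H1 u ltac:(lra)); specialize (H2 u ltac:(lra)). lra.
Qed.

Lemma approx_scal c h p : approxF h p -> approxF (fun u => c * h u) (fun u => c * p u).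
Proof.
  intros [K [d [Hd H]]]. exists (Rabs c * K), d. split; auto. intros u Hu.
  replace (c * h u - c * p u) with (c * (h u - p u)) by ring.
  rewrite Rabs_mult, Rmult_assoc. apply Rmult_le_compat_l. apply Rabs_pos. auto.
Qed.

Lemma approx_bounded v h S : approxF h (sev v S) ->
  exists B d, 0 < d /\ forall u, 0 < u < d -> Rabs (h u) <= B.
Proof.
  intros [K [d [Hd H]]]. destruct (sev_bound v S) as [B [HB HS]].
  exists (B + Rabs K), (Rmin d 1). split. apply Rmin_pos; lra. intros u Hu.
  pose proof (Rmin_l d 1); pose proof (Rmin_r d 1).
  replace (h u) with ((h u - sev v S u) + sev v S u) by ring.
  eapply Rle_trans; [apply Rabs_triang|].
  specialize (H u ltac:(lra)). specialize (HS u ltac:(lra)).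
  assert (u ^ 10 <= 1). { rewrite <- (pow1 10). apply pow_incr. lra. }
  assert (K * u ^ 10 <= Rabs K).
  { destruct (Rle_dec 0 K). rewrite Rabs_right by lra.
    rewrite <- (Rmult_1_r K) at 2. apply Rmult_le_compat_l; lra.
    pose proof (pow_le u 10 ltac:(lra)). pose proof (Rabs_pos K). nra. }
  lra.
Qed.

Lemma sev_bounded v S : exists B d, 0 < d /\ forall u, 0 < u < d -> Rabs (sev v S u) <= B.
Proof. apply (approx_bounded v _ S). apply approx_self. Qed.

Lemma approx_mul_gen h k p q : approxF h p -> approxF k q ->
  (exists B d, 0 < d /\ forall u, 0 < u < d -> Rabs (k u) <= B) ->
  (exists B d, 0 < d /\ forall u, 0 < u < d -> Rabs (p u) <= B) ->
  approxF (fun u => h u * k u) (fun u => p u * q u).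
Proof.
  intros [K1 [d1 [Hd1 H1]]] [K2 [d2 [Hd2 H2]]] [B1 [e1 [He1 E1]]] [B2 [e2 [He2 E2]]].
  exists (K1 * B1 + B2 * K2), (Rmin (Rmin d1 d2) (Rmin e1 e2)). split.
  repeat apply Rmin_pos; auto. intros u Hu.
  pose proof (Rmin_l (Rmin d1 d2) (Rmin e1 e2)); pose proof (Rmin_r (Rmin d1 d2) (Rmin e1 e2)).
  pose proof (Rmin_l d1 d2); pose proof (Rmin_r d1 d2);
  pose proof (Rmin_l e1 e2); pose proof (Rmin_r e1 e2).
  replace (h u * k u - p u * q u) with ((h u - p u) * k u + p u * (k u - q u)) by ring.
  eapply Rle_trans; [apply Rabs_triang|]. rewrite !Rabs_mult.
  specialize (H1 u ltac:(lra)); specialize (H2 u ltac:(lra)).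
  specialize (E1 u ltac:(lra)); specialize (E2 u ltac:(lra)).
  pose proof (Rabs_pos (h u - p u)); pose proof (Rabs_pos (k u));
  pose proof (Rabs_pos (p u)); pose proof (Rabs_pos (k u - q u)).
  pose proof (pow_le u 10 ltac:(lra)).
  assert (Rabs (h u - p u) * Rabs (k u) <= K1 * u ^ 10 * B1).
  { apply Rmult_le_compat; auto. }
  assert (Rabs (p u) * Rabs (k u - q u) <= B2 * (K2 * u ^ 10)).
  { apply Rmult_le_compat; auto. }
  nra.
Qed.

Lemma approx_trunc v h S : approxF h (sev v (smul S S)) -> True.
Proof. auto. Qed.

Lemma approx_firstn v h S : approxF h (sev v S) -> approxF h (sev v (firstn 10 S)).
Proof.
  intros [K [d [Hd H]]].
  destruct (peval_bound (skipn 10 (map (ipoly v) S))) as [B [HB HS]].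
  exists (K + B), (Rmin d 1). split. apply Rmin_pos; lra. intros u Hu.
  pose proof (Rmin_l d 1); pose proof (Rmin_r d 1).
  unfold sev in *. rewrite <- firstn_map.
  specialize (H u ltac:(lra)). specialize (HS u ltac:(lra)).
  rewrite (peval_split 10 (map (ipoly v) S)) in H.
  set (A := peval (firstn 10 (map (ipoly v) S)) u) in *.
  set (Z := peval (skipn 10 (map (ipoly v) S)) u) in *.
  replace (h u - A) with ((h u - (A + u ^ 10 * Z)) + u ^ 10 * Z) by ring.
  eapply Rle_trans; [apply Rabs_triang|]. rewrite Rabs_mult.
  pose proof (pow_le u 10 ltac:(lra)).
  rewrite (Rabs_right (u ^ 10)) by lra.
  assert (u ^ 10 * Rabs Z <= u ^ 10 * B) by (apply Rmult_le_compat_l; lra).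
  lra.
Qed.

Lemma approx_mt v h k S T : approxF h (sev v S) -> approxF k (sev v T) ->
  approxF (fun u => h u * k u) (sev v (mt S T)).
Proof.
  intros H1 H2. unfold mt. apply approx_firstn.
  eapply approx_ext_r.
  apply approx_mul_gen; eauto. eapply approx_bounded; eauto. apply sev_bounded.
  intros u; simpl. rewrite sev_smul. auto.
Qed.

Lemma approx_sadd v h k S T : approxF h (sev v S) -> approxF k (sev v T) ->
  approxF (fun u => h u + k u) (sev v (sadd S T)).
Proof.
  intros H1 H2. eapply approx_ext_r. apply approx_add; eauto.
  intros u; simpl. rewrite sev_sadd. auto.
Qed.

Lemma approx_sscale v c h S : approxF h (sev v S) ->
  approxF (fun u => ipoly v c * h u) (sev v (sscale c S)).
Proof.
  intros H1. eapply approx_ext_r. apply approx_scal; eauto.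
  intros u; simpl. rewrite sev_sscale. auto.
Qed.

Lemma approx_const v c : approxF (fun _ => ipoly v c) (sev v [c]).
Proof.
  eapply approx_ext_r. apply approx_self. intros u. unfold sev; simpl. ring.
Qed.

Lemma approx_scomp v h S A : approxF h (sev v S) ->
  approxF (fun u => peval (map (ipoly v) A) (h u)) (sev v (scomp A S)).
Proof.
  intros H. induction A as [|c A IH]; unfold scomp in *; cbn [fold_right map peval].
  - eapply approx_ext_r. apply approx_self. intros u. unfold sev; simpl. auto.
  - apply approx_sadd. apply approx_const. apply approx_mt; auto.
Qed.

Lemma is_one_sev v X : is_one X = true -> forall u, sev v X u = 1.
Proof.
  destruct X as [|p rest]; simpl; [discriminate|].
  destruct p as [|[m c] l]; try discriminate.
  destruct m as [|e1 [|e2 [|e3 [|e4 [|]]]]]; try discriminate.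
  destruct l; try discriminate.
  intros H u.
  repeat (apply andb_prop in H; destruct H as [H ?]).
  apply Nat.eqb_eq in H; subst.
  repeat match goal with
  | H : Nat.eqb _ 0 = true |- _ => apply Nat.eqb_eq in H; subst
  | H : Qeq_bool _ _ = true |- _ => apply Qeq_bool_eq, Qeq_eqR in H
  end.
  assert (Hr : peval (map (ipoly v) rest) u = 0).
  { match goal with H : forallb _ _ = true |- _ => rename H into Hf end.
    induction rest as [|p rest IH]; simpl; auto.
    simpl in Hf. apply andb_prop in Hf. destruct Hf as [Hp Hf].
    destruct p; [|discriminate]. rewrite IH by auto. rewrite ipoly_nil. ring. }
  unfold sev. cbn [map peval]. rewrite Hr.
  unfold ipoly; cbn [fold_right fst snd imono pow].
  match goal with H : Q2R c = Q2R 1 |- _ => rewrite H end.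
  unfold Q2R; simpl. field.
Qed.


Lemma pow10_le u : 0 <= u <= 1 -> u ^ 10 <= u.
Proof.
  intros Hu. replace (u ^ 10) with (u * u ^ 9) by ring.
  assert (u ^ 9 <= 1) by (rewrite <- (pow1 9); apply pow_incr; lra).
  pose proof (pow_le u 9 ltac:(lra)). nra.
Qed.

Lemma small_pow u K : 0 < u < 1 -> u < / (2 * (Rabs K + 1)) -> Rabs (K * u ^ 10) <= / 2.
Proof.
  intros Hu Hs. rewrite Rabs_mult. 
  assert (u ^ 10 <= u) by (apply pow10_le; lra).
  pose proof (pow_le u 10 ltac:(lra)). rewrite (Rabs_right (u^10)) by lra.
  pose proof (Rabs_pos K).
  assert (u * (2 * (Rabs K + 1)) < 1).
  { apply (Rmult_lt_compat_r (2 * (Rabs K + 1))) in Hs; [|lra].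
    rewrite Rinv_l in Hs by lra. lra. }
  nra.
Qed.

Lemma approx_inv v h S I : approxF h (sev v S) -> is_one (mt S I) = true ->
  approxF (fun u => / h u) (sev v I).
Proof.
  intros H Hc.
  assert (H1 : approxF (fun u => h u * sev v I u) (sev v (mt S I))).
  { apply approx_mt; auto. apply approx_self. }
  destruct H1 as [K [d [Hd H1]]].
  destruct (sev_bound v I) as [B [HB HI]].
  exists (2 * B * Rabs K), (Rmin (Rmin d 1) (/ (2 * (Rabs K + 1)))).
  split. repeat apply Rmin_pos; try lra. apply Rinv_0_lt_compat. pose proof (Rabs_pos K); lra.
  intros u Hu.
  pose proof (Rmin_l (Rmin d 1) (/ (2 * (Rabs K + 1)))); pose proof (Rmin_r (Rmin d 1) (/ (2 * (Rabs K + 1))));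
  pose proof (Rmin_l d 1); pose proof (Rmin_r d 1).
  specialize (H1 u ltac:(lra)). rewrite (is_one_sev v _ Hc) in H1.
  specialize (HI u ltac:(lra)).
  assert (Hs : Rabs (K * u ^ 10) <= / 2) by (apply small_pow; lra).
  pose proof (pow_le u 10 ltac:(lra)).
  assert (Hk : Rabs (h u * sev v I u - 1) <= Rabs K * u ^ 10).
  { eapply Rle_trans; [exact H1|]. apply Rmult_le_compat_r; auto. apply Rle_abs. }
  rewrite Rabs_mult, (Rabs_right (u^10)) in Hs by lra.
  assert (Hp : / 2 <= Rabs (h u * sev v I u)).
  { pose proof (Rabs_triang_inv 1 (1 - h u * sev v I u)) as Ht.
    replace (1 - (1 - h u * sev v I u)) with (h u * sev v I u) in Ht by ring.
    rewrite Rabs_R1, Rabs_minus_sym in Ht. lra. }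
  assert (Hh : h u <> 0). { intro E. rewrite E, Rmult_0_l, Rabs_R0 in Hp. lra. }
  assert (HIu : sev v I u <> 0). { intro E. rewrite E, Rmult_0_r, Rabs_R0 in Hp. lra. }
  replace (/ h u - sev v I u) with ((1 - h u * sev v I u) * (sev v I u * / (h u * sev v I u))) by (field; auto).
  rewrite Rabs_mult, Rabs_mult, Rabs_inv, Rabs_minus_sym.
  assert (Hq : Rabs (sev v I u) * / Rabs (h u * sev v I u) <= 2 * B).
  { apply (Rmult_le_reg_r (Rabs (h u * sev v I u))). lra.
    rewrite Rmult_assoc, Rinv_l by lra. nra. }
  pose proof (Rabs_pos (h u * sev v I u - 1)).
  pose proof (Rabs_pos (sev v I u)).
  assert (0 <= Rabs (sev v I u) * / Rabs (h u * sev v I u)).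
  { apply Rmult_le_pos; auto. apply Rlt_le, Rinv_0_lt_compat; lra. }
  assert (Rabs (h u * sev v I u - 1) * (Rabs (sev v I u) * / Rabs (h u * sev v I u))
          <= (Rabs K * u ^ 10) * (2 * B)) by (apply Rmult_le_compat; auto).
  lra.
Qed.

Lemma head_zero_bound v w W : head_zero W = true -> approxF w (sev v W) ->
  exists L d, 0 <= L /\ 0 < d /\ forall u, 0 < u < d -> Rabs (w u) <= L * u.
Proof.
  destruct W as [|p W']; [discriminate|]. destruct p; [|discriminate]. intros _ [K [d [Hd H]]].
  destruct (sev_bound v W') as [B [HB HW]].
  exists (B + Rabs K), (Rmin d 1). split. pose proof (Rabs_pos K); lra.
  split. apply Rmin_pos; lra. intros u Hu.
  pose proof (Rmin_l d 1); pose proof (Rmin_r d 1).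
  specialize (H u ltac:(lra)). specialize (HW u ltac:(lra)).
  unfold sev in H. cbn [map peval] in H. rewrite ipoly_nil in H. change (peval (map (ipoly v) W') u) with (sev v W' u) in H.
  replace (w u) with ((w u - (0 + u * sev v W' u)) + u * sev v W' u) by ring.
  eapply Rle_trans; [apply Rabs_triang|]. rewrite Rabs_mult, (Rabs_right u) by lra.
  assert (u ^ 10 <= u) by (apply pow10_le; lra).
  assert (K * u ^ 10 <= Rabs K * u).
  { pose proof (pow_le u 10 ltac:(lra)). pose proof (Rabs_pos K).
    apply Rle_trans with (Rabs K * u ^ 10). apply Rmult_le_compat_r; auto. apply Rle_abs.
    apply Rmult_le_compat_l; auto. }
  assert (u * Rabs (sev v W' u) <= u * B) by (apply Rmult_le_compat_l; lra).
  lra.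
Qed.

Definition Gexp (v : nat -> R) (g : R -> R) :=
  exists K d, 0 < d /\ forall w, Rabs w < d ->
    Rabs (g w - peval (map (ipoly v) Asym) (w * w)) <= K * w ^ 10.

Lemma approx_gcomp v g w W : Gexp v g -> approxF w (sev v W) -> head_zero W = true ->
  approxF (fun u => g (w u)) (sev v (scomp Asym (mt W W))).
Proof.
  intros [K [dg [Hdg HG]]] Hw Hz.
  destruct (head_zero_bound v w W Hz Hw) as [L [dl [HL [Hdl Hb]]]].
  assert (Hc := approx_scomp v (fun u => w u * w u) (mt W W) Asym (approx_mt v _ _ _ _ Hw Hw)).
  destruct Hc as [K2 [d2 [Hd2 H2]]].
  exists (Rabs K * L ^ 10 + K2), (Rmin (Rmin dl d2) (dg / (L + 1))).
  split. repeat apply Rmin_pos; try lra. apply Rdiv_lt_0_compat; lra.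
  intros u Hu.
  pose proof (Rmin_l (Rmin dl d2) (dg / (L + 1))); pose proof (Rmin_r (Rmin dl d2) (dg / (L + 1)));
  pose proof (Rmin_l dl d2); pose proof (Rmin_r dl d2).
  specialize (Hb u ltac:(lra)). specialize (H2 u ltac:(lra)).
  assert (Hwd : Rabs (w u) < dg).
  { assert (u * (L + 1) < dg).
    { assert (Hq : u < dg / (L+1)) by lra.
      apply (Rmult_lt_compat_r (L+1)) in Hq; [|lra].
      unfold Rdiv in Hq. rewrite Rmult_assoc, Rinv_l in Hq by lra. lra. }
    nra. }
  specialize (HG (w u) Hwd).
  replace (g (w u) - sev v (scomp Asym (mt W W)) u) with
    ((g (w u) - peval (map (ipoly v) Asym) (w u * w u)) +
     (peval (map (ipoly v) Asym) (w u * w u) - sev v (scomp Asym (mt W W)) u)) by ring.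
  eapply Rle_trans; [apply Rabs_triang|].
  assert (K * w u ^ 10 <= Rabs K * L ^ 10 * u ^ 10).
  { apply Rle_trans with (Rabs K * w u ^ 10).
    apply Rmult_le_compat_r. replace (w u ^ 10) with ((w u ^ 5) ^ 2) by ring.
    apply pow2_ge_0. apply Rle_abs.
    rewrite Rmult_assoc, <- Rpow_mult_distr. apply Rmult_le_compat_l. apply Rabs_pos.
    replace (w u ^ 10) with (Rabs (w u) ^ 10).
    apply pow_incr. split; [apply Rabs_pos|auto].
    rewrite RPow_abs. apply Rabs_right. replace (w u ^ 10) with ((w u ^ 5) ^ 2) by ring.
    apply Rle_ge, pow2_ge_0. }
  lra.
Qed.


Lemma homog_form M a b : homogeneous_mean M -> 0 < a -> 0 < b ->
  M a b = (/2 * (a + b)) * M (1 - /2 * ((b + -1 * a) * / (/2 * (a + b))))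
                              (1 + /2 * ((b + -1 * a) * / (/2 * (a + b)))).
Proof.
  intros Hh Ha Hb. set (c := /2 * (a + b)). set (w := /2 * ((b + -1 * a) * / c)).
  assert (Hc : 0 < c) by (unfold c; lra).
  assert (E1 : a = c * (1 - w)) by (unfold w, c; field; lra).
  assert (E2 : b = c * (1 + w)) by (unfold w, c; field; lra).
  assert (H1 : 0 < 1 - w). { apply (Rmult_lt_reg_l c); lra. }
  assert (H2 : 0 < 1 + w). { apply (Rmult_lt_reg_l c); lra. }
  rewrite <- Hh by auto. rewrite <- E1, <- E2. reflexivity.
Qed.

Lemma approx_mstep (M : R -> R -> R) v al be SA SB :
  homogeneous_mean M -> Gexp v (fun w => M (1 - w) (1 + w)) ->
  approxF al (sev v SA) -> approxF be (sev v SB) ->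
  (exists d, 0 < d /\ forall u, 0 < u < d -> 0 < al u /\ 0 < be u) ->
  mcheck SA SB = true ->
  approxF (fun u => M (al u) (be u)) (sev v (mstep SA SB)).
Proof.
  intros Hh HG Ha Hb Hpos Hchk. unfold mcheck in Hchk.
  apply andb_prop in Hchk. destruct Hchk as [Hone Hz].
  assert (Hc : approxF (fun u => ipoly v half * (al u + be u)) (sev v (CSof SA SB))).
  { apply approx_sscale, approx_sadd; auto. }
  assert (Hci := approx_inv v _ _ _ Hc Hone).
  assert (Hd : approxF (fun u => be u + ipoly v mone * al u) (sev v (sadd SB (sscale mone SA)))).
  { apply approx_sadd; auto. apply approx_sscale; auto. }
  assert (Hw := approx_sscale v half _ _ (approx_mt v _ _ _ _ Hd Hci)).
  assert (Hg := approx_gcomp v _ _ _ HG Hw Hz).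
  assert (Hf := approx_mt v _ _ _ _ Hc Hg).
  unfold mstep. eapply approx_ext. exact Hf.
  destruct Hpos as [d [Hd0 Hp]]. exists d. split; auto. intros u Hu.
  destruct (Hp u Hu) as [Hau Hbu]. cbv beta.
  rewrite ipoly_half, ipoly_mone. symmetry. apply homog_form; auto.
Qed.


Lemma pw x n : x <> 0 -> powerRZ x (1 - 2 * Z.of_nat n) = x * / x ^ (2 * n).
Proof.
  intro Hx. replace (1 - 2 * Z.of_nat n)%Z with (1 + - Z.of_nat (2 * n))%Z by lia.
  rewrite powerRZ_add, powerRZ_neg', <- pow_powerRZ by auto. simpl. ring.
Qed.

Lemma zero_of_small c C d : 0 < d -> (forall u, 0 < u < d -> Rabs c <= C * u) -> c = 0.
Proof.
  intros Hd H. destruct (Req_dec c 0) as [|Hc]; auto. exfalso.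
  assert (Hac : 0 < Rabs c) by (apply Rabs_pos_lt; auto).
  pose proof (Rabs_pos C).
  set (u := Rmin (d / 2) (Rabs c / (2 * (Rabs C + 1)))).
  assert (Hu1 : u <= d / 2) by apply Rmin_l.
  assert (Hu2 : u <= Rabs c / (2 * (Rabs C + 1))) by apply Rmin_r.
  assert (Hu0 : 0 < u). { apply Rmin_pos. lra. apply Rdiv_lt_0_compat; lra. }
  specialize (H u ltac:(lra)).
  assert (C * u <= Rabs C * u) by (apply Rmult_le_compat_r; [lra|apply Rle_abs]).
  assert (u * (2 * (Rabs C + 1)) <= Rabs c).
  { apply (Rmult_le_compat_r (2 * (Rabs C + 1))) in Hu2; [|lra].
    unfold Rdiv in Hu2. rewrite Rmult_assoc, Rinv_l in Hu2 by lra. lra. }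
  nra.
Qed.

Lemma uniq_coef n : forall s K d, 0 < d -> (forall u, 0 < u < d -> Rabs (peval s u) <= K * u ^ n) ->
  forall k, (k < n)%nat -> nth k s 0 = 0.
Proof.
  induction n as [|n IH]; intros s K d Hd H k Hk; [lia|].
  destruct s as [|c s]; [destruct k; reflexivity|].
  destruct (peval_bound s) as [B [HB Hs]].
  assert (Hc : c = 0).
  { apply (zero_of_small c (Rabs K + B) (Rmin d 1)). apply Rmin_pos; lra.
    intros u Hu. pose proof (Rmin_l d 1); pose proof (Rmin_r d 1).
    specialize (H u ltac:(lra)). specialize (Hs u ltac:(lra)). cbn [peval] in H.
    replace c with ((c + u * peval s u) - u * peval s u) by ring.
    eapply Rle_trans; [apply Rabs_triang|]. rewrite Rabs_Ropp, Rabs_mult, (Rabs_right u) by lra.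
    assert (u ^ S n <= u). { simpl. assert (u ^ n <= 1) by (rewrite <- (pow1 n); apply pow_incr; lra).
      pose proof (pow_le u n ltac:(lra)). nra. }
    assert (K * u ^ S n <= Rabs K * u).
    { pose proof (pow_le u (S n) ltac:(lra)). pose proof (Rabs_pos K).
      apply Rle_trans with (Rabs K * u ^ S n). apply Rmult_le_compat_r; auto. apply Rle_abs.
      apply Rmult_le_compat_l; auto. }
    assert (u * Rabs (peval s u) <= u * B) by (apply Rmult_le_compat_l; lra).
    lra. }
  subst c. destruct k as [|k]; [reflexivity|]. simpl.
  apply (IH s K d Hd); [|lia].
  intros u Hu. specialize (H u Hu). simpl in H. rewrite Rplus_0_l, Rabs_mult, (Rabs_right u) in H by lra.
  apply (Rmult_le_reg_l u). lra. simpl in H. lra.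
Qed.

Lemma coefs_gen v h P Q : approxF h (sev v P) -> approxF h (sev v Q) ->
  forall k, (k < 10)%nat -> ipoly v (nth k (sadd P (sscale mone Q)) []) = 0.
Proof.
  intros [K1 [d1 [Hd1 H1]]] [K2 [d2 [Hd2 H2]]] k Hk.
  assert (E := map_nth (ipoly v) (sadd P (sscale mone Q)) [] k). rewrite <- E. clear E.
  change (ipoly v []) with 0.
  refine (uniq_coef 10 (map (ipoly v) (sadd P (sscale mone Q))) (K1 + K2) (Rmin d1 d2) _ _ k Hk).
  apply Rmin_pos; auto.
  intros u Hu. pose proof (Rmin_l d1 d2); pose proof (Rmin_r d1 d2).
  specialize (H1 u ltac:(lra)). specialize (H2 u ltac:(lra)).
  change (peval (map (ipoly v) (sadd P (sscale mone Q))) u) with (sev v (sadd P (sscale mone Q)) u).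
  rewrite sev_sadd, sev_sscale, ipoly_mone.
  replace (sev v P u + -1 * sev v Q u) with ((h u - sev v Q u) - (h u - sev v P u)) by ring.
  eapply Rle_trans; [apply Rabs_triang|]. rewrite Rabs_Ropp. lra.
Qed.

Section Main.
Variable M : R -> R -> R.
Variable a : nat -> R.
Hypothesis Hmean : is_mean M.
Hypothesis Hsym : symmetric_mean M.
Hypothesis Hhom : homogeneous_mean M.
Hypothesis Hstab : stable_mean M.
Hypothesis Hexp : has_sym_asymp_expansion M a.

Definition g (w : R) := M (1 - w) (1 + w).
Definition vv (i : nat) := a (S i).

Lemma g_bounds u : 0 <= u < 1 -> 0 < g u /\ 1 - u <= g u <= 1 + u.
Proof.
  intros Hu. destruct (Hmean (1 - u) (1 + u)) as [H1 [H2 H3]]; try lra.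
  rewrite Rmin_left in H2 by lra. rewrite Rmax_right in H3 by lra. unfold g; lra.
Qed.

Lemma g_even w : -1 < w < 1 -> g (- w) = g w.
Proof.
  intros Hw. unfold g. replace (1 - - w) with (1 + w) by ring.
  replace (1 + - w) with (1 - w) by ring. apply Hsym; lra.
Qed.

Lemma g_zero : g 0 = 1.
Proof. pose proof (g_bounds 0 ltac:(lra)). lra. Qed.

Definition Sig (u : R) := a 0%nat + a 1%nat * u ^ 2 + a 2%nat * u ^ 4 + a 3%nat * u ^ 6
  + a 4%nat * u ^ 8 + a 5%nat * u ^ 10.

Lemma g_exp : exists d, 0 < d /\ forall u, 0 < u < d -> Rabs (g u - Sig u) <= u ^ 10.
Proof.
  destruct (Hexp 1 5%nat 1 ltac:(lra)) as [X HX].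
  exists (/ (Rabs X + 2)). split. apply Rinv_0_lt_compat. pose proof (Rabs_pos X); lra.
  intros u Hu. set (x := / u).
  assert (Hx : Rabs X + 2 < x).
  { unfold x. rewrite <- (Rinv_inv (Rabs X + 2)). apply Rinv_lt_contravar.
    apply Rmult_lt_0_compat; lra. lra. }
  pose proof (Rle_abs X). pose proof (Rabs_pos X).
  specialize (HX x ltac:(lra)).
  assert (Hux : u * x = 1) by (unfold x; field; lra).
  assert (Hu1 : u < 1) by nra.
  assert (Hx0 : x <> 0) by (pose proof (Rabs_pos X); intro; lra).
  assert (E1 : M (x - 1) (x + 1) = x * g u).
  { unfold g. rewrite <- Hhom by lra. f_equal; unfold x; field; lra. }
  rewrite E1 in HX. cbn [sum_f_R0] in HX. rewrite !pw in HX by auto. cbn [Nat.mul Nat.add] in HX.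
  replace (x * g u - _) with (x * (g u - Sig u)) in HX.
  2:{ unfold Sig, x. field. lra. }
  rewrite Rabs_mult, (Rabs_right x) in HX by lra.
  replace (x * / x ^ 10) with (x * u ^ 10) in HX.
  2:{ unfold x. field. lra. }
  rewrite Rabs_mult, (Rabs_right x), (Rabs_right (u ^ 10)) in HX by (try lra; apply Rle_ge, pow_le; lra).
  apply (Rmult_le_reg_l x). lra. lra.
Qed.

Lemma a0_one : a 0%nat = 1.
Proof.
  destruct g_exp as [d [Hd H]].
  destruct (peval_bound [0; a 1%nat; 0; a 2%nat; 0; a 3%nat; 0; a 4%nat; 0; a 5%nat]) as [B [HB HT]].
  apply Rminus_diag_uniq. apply (zero_of_small _ (B + 2) (Rmin d 1)). apply Rmin_pos; lra.
  intros u Hu. pose proof (Rmin_l d 1); pose proof (Rmin_r d 1).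
  specialize (H u ltac:(lra)). specialize (HT u ltac:(lra)).
  destruct (g_bounds u ltac:(lra)) as [_ Hg].
  set (T := peval [0; a 1%nat; 0; a 2%nat; 0; a 3%nat; 0; a 4%nat; 0; a 5%nat] u) in *.
  assert (ES : Sig u = a 0%nat + u * T) by (unfold T, Sig; cbn [peval]; ring).
  replace (a 0%nat - 1) with (- (u * T) + (Sig u - g u) + (g u - 1)) by (rewrite ES; ring).
  assert (u ^ 10 <= u) by (apply pow10_le; lra).
  rewrite Rabs_minus_sym in H.
  pose proof (Rabs_triang (- (u * T) + (Sig u - g u)) (g u - 1)).
  pose proof (Rabs_triang (- (u * T)) (Sig u - g u)).
  rewrite Rabs_Ropp, Rabs_mult, (Rabs_right u) in * by lra.
  assert (u * Rabs T <= u * B) by (apply Rmult_le_compat_l; lra).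
  assert (Rabs (g u - 1) <= u) by (apply Rabs_le; lra).
  lra.
Qed.

Definition Pw (w : R) := 1 + w * w * (a 1%nat + w * w * (a 2%nat + w * w * (a 3%nat + w * w * a 4%nat))).

Lemma Pw_Sig w : Pw w = Sig w - a 5%nat * w ^ 10.
Proof. unfold Pw, Sig. rewrite a0_one. ring. Qed.

Lemma sev_Psym u : sev vv Psym u = Pw u.
Proof.
  unfold sev, Psym; cbn [map peval].
  rewrite ipoly_one, ipoly_X1, ipoly_X2, ipoly_X3, ipoly_X4, !ipoly_nil. unfold vv, Pw. ring.
Qed.

Lemma peval_Asym w : peval (map (ipoly vv) Asym) (w * w) = Pw w.
Proof.
  unfold Asym; cbn [map peval].
  rewrite ipoly_one, ipoly_X1, ipoly_X2, ipoly_X3, ipoly_X4. unfold vv, Pw. ring.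
Qed.

Lemma approx_g_P : approxF g (sev vv Psym).
Proof.
  destruct g_exp as [d [Hd H]]. exists (1 + Rabs (a 5%nat)), d. split; auto.
  intros u Hu. rewrite sev_Psym, Pw_Sig.
  replace (g u - (Sig u - a 5%nat * u ^ 10)) with ((g u - Sig u) + a 5%nat * u ^ 10) by ring.
  eapply Rle_trans; [apply Rabs_triang|]. rewrite Rabs_mult.
  pose proof (pow_le u 10 ltac:(lra)). rewrite (Rabs_right (u ^ 10)) by lra.
  specialize (H u Hu). lra.
Qed.

Lemma Gexp_g : Gexp vv g.
Proof.
  destruct g_exp as [d [Hd H]]. exists (1 + Rabs (a 5%nat)), (Rmin d 1). split.
  apply Rmin_pos; lra. intros w Hw. rewrite peval_Asym.
  pose proof (Rmin_l d 1); pose proof (Rmin_r d 1).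
  assert (Key : forall u, 0 < u < Rmin d 1 -> Rabs (g u - Pw u) <= (1 + Rabs (a 5%nat)) * u ^ 10).
  { intros u Hu. rewrite Pw_Sig.
    replace (g u - (Sig u - a 5%nat * u ^ 10)) with ((g u - Sig u) + a 5%nat * u ^ 10) by ring.
    eapply Rle_trans; [apply Rabs_triang|]. rewrite Rabs_mult.
    pose proof (pow_le u 10 ltac:(lra)). rewrite (Rabs_right (u ^ 10)) by lra.
    specialize (H u ltac:(lra)). lra. }
  destruct (Rtotal_order w 0) as [Hn|[Hz|Hp]].
  - rewrite <- (g_even w) by (apply Rabs_def2 in Hw; lra).
    replace (Pw w) with (Pw (- w)) by (unfold Pw; ring).
    replace (w ^ 10) with ((- w) ^ 10) by ring.
    apply Key. split. lra. rewrite Rabs_left in Hw; lra.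
  - subst w. replace (g 0 - Pw 0) with 0 by (rewrite g_zero; unfold Pw; ring).
    rewrite Rabs_R0, pow_i by lia. lra.
  - apply Key. split. lra. rewrite Rabs_right in Hw; lra.
Qed.

Lemma approx_g_Q : approxF g (sev vv Qf).
Proof.
  assert (Hm : approxF (fun u => 1 - u) (sev vv Sm)).
  { eapply approx_ext_r. apply approx_self. intros u. unfold sev, Sm; cbn [map peval].
    rewrite ipoly_one, ipoly_mone. ring. }
  assert (Hpl : approxF (fun u => 1 + u) (sev vv Sp)).
  { eapply approx_ext_r. apply approx_self. intros u. unfold sev, Sp; cbn [map peval].
    rewrite ipoly_one. ring. }
  assert (HP := approx_g_P). assert (HG := Gexp_g).
  assert (H1 : approxF (fun u => M (1 - u) (g u)) (sev vv Pp)).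
  { apply (approx_mstep M vv (fun u => 1 - u) g Sm Psym); [exact Hhom|exact HG|exact Hm|exact HP| |apply chk1].
    exists 1. split. lra. intros u Hu.
    split. lra. apply g_bounds; lra. }
  assert (H2 : approxF (fun u => M (g u) (1 + u)) (sev vv Pq)).
  { apply (approx_mstep M vv g (fun u => 1 + u) Psym Sp); [exact Hhom|exact HG|exact HP|exact Hpl| |apply chk2].
    exists 1. split. lra. intros u Hu.
    split. apply g_bounds; lra. lra. }
  assert (H3 : approxF (fun u => M (M (1 - u) (g u)) (M (g u) (1 + u))) (sev vv Qf)).
  { apply (approx_mstep M vv _ _ Pp Pq); [exact Hhom|exact HG|exact H1|exact H2| |apply chk3].
    exists 1. split. lra. intros u Hu.
    destruct (g_bounds u ltac:(lra)) as [Hg _].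
    split; apply Hmean; lra. }
  eapply approx_ext. exact H3. exists 1. split. lra. intros u Hu.
  unfold g. symmetry. apply Hstab; lra.
Qed.

Lemma coefs : forall k, (k < 10)%nat -> ipoly vv (nth k (sadd Psym (sscale mone Qf)) []) = 0.
Proof. exact (coefs_gen vv g Psym Qf approx_g_P approx_g_Q). Qed.
End Main.


Ltac getc H k :=
  let E := eval vm_compute in (nth k (sadd Psym (sscale mone Qf)) []) in
  replace (nth k (sadd Psym (sscale mone Qf)) []) with E in H by (vm_compute; reflexivity);
  unfold ipoly in H; cbn [fold_right fst snd imono pow] in H;
  unfold Q2R in H; cbn [Qnum Qden] in H.

Theorem mainTheorem4 (M : R -> R -> R) (a : nat -> R) :
  is_mean M -> symmetric_mean M -> homogeneous_mean M -> stable_mean M ->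
  has_sym_asymp_expansion M a ->
  forall t : R,
    big_O_infty
      (fun x => M (x - t) (x + t)
         - (x + a 1%nat * t ^ 2 / x
            + / 6 * a 1%nat * (1 + a 1%nat) * (1 - 4 * a 1%nat) * t ^ 4 / x ^ 3
            + / 90 * a 1%nat * (1 + a 1%nat)
                * (6 - 31 * a 1%nat + 36 * a 1%nat ^ 2 + 64 * a 1%nat ^ 3) * t ^ 6 / x ^ 5
            + / 2520 * a 1%nat * (1 + a 1%nat)
                * (90 - 531 * a 1%nat + 937 * a 1%nat ^ 2 + 568 * a 1%nat ^ 3
                   - 3088 * a 1%nat ^ 4 - 2176 * a 1%nat ^ 5) * t ^ 8 / x ^ 7))
      (fun x => powerRZ x (-9)).
Proof.
  intros Hmean Hsym Hhom Hstab Hexp t.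
  assert (HC : forall k, (k < 10)%nat -> ipoly (vv a) (nth k (sadd Psym (sscale mone Qf)) []) = 0)
    by (eapply coefs; eauto).
  assert (A0 : a 0%nat = 1) by (eapply a0_one; eauto).
  assert (H4 := HC 4%nat ltac:(lia)). assert (H6 := HC 6%nat ltac:(lia)).
  assert (H8 := HC 8%nat ltac:(lia)). clear HC.
  getc H4 4%nat. getc H6 6%nat. getc H8 8%nat. unfold vv in H4, H6, H8.
  assert (A2 : a 2%nat = / 6 * a 1%nat * (1 + a 1%nat) * (1 - 4 * a 1%nat)) by lra.
  rewrite A2 in H6, H8.
  assert (A3 : a 3%nat = / 90 * a 1%nat * (1 + a 1%nat)
                * (6 - 31 * a 1%nat + 36 * a 1%nat ^ 2 + 64 * a 1%nat ^ 3)) by lra.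
  rewrite A3 in H8.
  assert (A4 : a 4%nat = / 2520 * a 1%nat * (1 + a 1%nat)
                * (90 - 531 * a 1%nat + 937 * a 1%nat ^ 2 + 568 * a 1%nat ^ 3
                   - 3088 * a 1%nat ^ 4 - 2176 * a 1%nat ^ 5)) by lra.
  clear H4 H6 H8.
  destruct (Hexp t 5%nat 1 ltac:(lra)) as [X HX].
  exists (1 + Rabs (a 5%nat * t ^ 10)), (Rmax X 1). intros x Hx.
  pose proof (Rmax_l X 1); pose proof (Rmax_r X 1).
  assert (Hx0 : x <> 0) by (intro; lra).
  specialize (HX x ltac:(lra)).
  assert (Hp9 : powerRZ x (-9) = x * / x ^ 10) by exact (pw x 5%nat Hx0).
  cbn [sum_f_R0] in HX. rewrite !pw in HX by auto. cbn [Nat.mul Nat.add] in HX.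
  rewrite Hp9.
  set (S := a 0%nat * t ^ 0 * (x * / x ^ 0) + a 1%nat * t ^ 2 * (x * / x ^ 2) +
       a 2%nat * t ^ 4 * (x * / x ^ 4) + a 3%nat * t ^ 6 * (x * / x ^ 6) +
       a 4%nat * t ^ 8 * (x * / x ^ 8) + a 5%nat * t ^ 10 * (x * / x ^ 10)) in HX.
  match goal with |- Rabs (M (x - t) (x + t) - ?F) <= _ =>
    replace (M (x - t) (x + t) - F) with ((M (x - t) (x + t) - S) + a 5%nat * t ^ 10 * (x * / x ^ 10)) end.
  2:{ unfold S. rewrite A0, A2, A3, A4. field. auto. }
  eapply Rle_trans; [apply Rabs_triang|]. rewrite Rabs_mult. lra.
Qed.
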